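(* Let $R$ be a ring. If $A$ is a clopen subset of $J\text{-spec}(R)$, then there exists $e\in R$ such that $A=W(e)$ and $eR(1-e)\subseteq J(R)$.
   Context: Rings are associative with identity, not necessarily commutative; $J(R)$ is the Jacobson radical. $J\text{-spec}(R)$ is the set of all prime (two-sided) ideals $P$ of $R$ with $J(R)\subseteq P$, topologized so that the closed sets are exactly the sets $W(I)=\{P\in J\text{-spec}(R): I\subseteq P\}$ for ideals $I$ of $R$. For $a\in R$, $W(a)=W(RaR)$. *)

(* Defs.v *)
(* Rings: associative with 1, not necessarily commutative,
   possibly the zero ring (pzRingType). Subsets of R are predicates R -> Prop. *)
From HB Require Import structures.
From mathcomp Require Import all_boot all_order all_algebra.
Set Implicit Arguments. Unset Strict Implicit. Unset Printing Implicit Defensive.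
Import GRing.Theory.
Local Open Scope ring_scope.

Section Defs.
Variable R : pzRingType.

Definition addsubgroup (I : R -> Prop) : Prop :=
  I 0 /\ (forall x y, I x -> I y -> I (x - y)).

Definition left_ideal (I : R -> Prop) : Prop :=
  addsubgroup I /\ (forall r x, I x -> I (r * x)).

Definition ideal (I : R -> Prop) : Prop :=
  addsubgroup I /\ (forall r x, I x -> I (r * x)) /\ (forall r x, I x -> I (x * r)).

Definition proper (I : R -> Prop) : Prop := exists x, ~ I x.

Definition maximal_left_ideal (M : R -> Prop) : Prop :=
  left_ideal M /\ proper M /\
  (forall N, left_ideal N -> proper N -> (forall x, M x -> N x) -> forall x, N x -> M x).

Definition jacobson (x : R) : Prop :=
  forall M, maximal_left_ideal M -> M x.

Definition prime_ideal (P : R -> Prop) : Prop :=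
  ideal P /\ proper P /\
  (forall I J, ideal I -> ideal J ->
     (forall a b, I a -> J b -> P (a * b)) ->
     (forall a, I a -> P a) \/ (forall b, J b -> P b)).

Definition Jspec (P : R -> Prop) : Prop :=
  prime_ideal P /\ (forall x, jacobson x -> P x).

Definition W (I : R -> Prop) (P : R -> Prop) : Prop :=
  Jspec P /\ (forall x, I x -> P x).

Definition gen_ideal (a : R) (x : R) : Prop :=
  forall I, ideal I -> I a -> I x.

Definition We (a : R) := W (gen_ideal a).

Definition closed_Jspec (A : (R -> Prop) -> Prop) : Prop :=
  exists I, ideal I /\ forall P, A P <-> W I P.

Definition open_Jspec (A : (R -> Prop) -> Prop) : Prop :=
  closed_Jspec (fun P => Jspec P /\ ~ A P).

End Defs.

(* Main.v *)
Require Import Defs.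
From HB Require Import structures.
From mathcomp Require Import all_boot all_order all_algebra.
From mathcomp Require classical_sets.
From Stdlib Require Import Classical.
Import GRing.Theory.
Local Open Scope ring_scope.

Section Helpers.
Variable R : pzRingType.

Lemma as_add (I : R -> Prop) x y : addsubgroup I -> I x -> I y -> I (x + y).
Proof.
move=> [I0 Isub] Ix Iy.
have : I (x - (0 - y)) by apply: (Isub) => //; apply: (Isub).
by rewrite sub0r opprK.
Qed.

Lemma li_not1 (M : R -> Prop) : left_ideal M -> Defs.proper M -> ~ M 1.
Proof. move=> [_ Hm] [x Hx] M1; apply: Hx; rewrite -(mulr1 x); exact: Hm. Qed.

Lemma max_gen (M : R -> Prop) c : maximal_left_ideal M -> ~ M c ->
  forall z, exists m s, M m /\ z = m + s * c.
Proof.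
move=> [[[M0 Msub] Mmul] [Mpr Mmax]] Mc.
pose N z := exists m s, M m /\ z = m + s * c.
have NL : left_ideal N.
  split; first split.
  - by exists 0, 0; rewrite mul0r addr0.
  - move=> x y [m1 [s1 [Hm1 ->]]] [m2 [s2 [Hm2 ->]]].
    exists (m1 - m2), (s1 - s2); split; first exact: Msub.
    by rewrite mulrBl opprD !addrA; congr (_ + _); rewrite addrAC.
  - move=> r x [m [s [Hm ->]]]; exists (r * m), (r * s); split; first exact: Mmul.
    by rewrite mulrDr mulrA.
case: (classic (Defs.proper N)) => [Np|Nnp].
  exfalso; apply: Mc; apply: (Mmax N NL Np).
    by move=> x Mx; exists x, 0; rewrite mul0r addr0.
  by exists 0, 1; rewrite add0r mul1r.
move=> z; apply: NNPP => Hz; apply: Nnp; by exists z.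
Qed.

Lemma jac_mulr (x r : R) : jacobson x -> jacobson (x * r).
Proof.
move=> Jx M HM.
case: (classic (forall t, M (t * r))) => [H|H]; first exact: H.
have [[[M0 Msub] Mmul] [Mpr Mmax]] := HM.
apply: (Jx (fun y => M (y * r))); split; [split; [split|]|split].
- by rewrite mul0r.
- by move=> a b Ha Hb; rewrite mulrBl; apply: (Msub).
- by move=> s a Ha; rewrite -mulrA; apply: (Mmul).
- by apply: NNPP => Hn; apply: (H) => t; apply: NNPP => Ht; apply: (Hn); exists t.
- move=> N [[N0 Nsub] Nmul] Npr Hsub y Ny.
  apply: NNPP => Hyr; exfalso.
  apply: (@li_not1 N (conj (conj N0 Nsub) Nmul) Npr).
  have [m [s [Hm Hz]]] := max_gen _ _ HM Hyr (1 * r).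
  have H1 : N (1 - s * y).
    apply: (Hsub); rewrite mulrBl -mulrA Hz.
    by rewrite addrK.
  have H2 : N (s * y) by apply: (Nmul).
  have := @as_add N _ _ (conj N0 Nsub) H1 H2.
  by rewrite subrK.
Qed.

Definition ann (M : R -> Prop) x := forall r, M (x * r).

Lemma ann_prime M : maximal_left_ideal M -> prime_ideal (ann M).
Proof.
move=> HM; have [[[M0 Msub] Mmul] [Mpr Mmax]] := HM.
split; [split; [split|split]|split].
- by move=> r; rewrite mul0r.
- by move=> a b Ha Hb r; rewrite mulrBl; apply: (Msub).
- by move=> s a Ha r; rewrite -mulrA; apply: (Mmul).
- by move=> s a Ha r; rewrite -mulrA; apply: (Ha).
- exists 1 => H; apply: (@li_not1 M (conj (conj M0 Msub) Mmul) Mpr).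
  by have := H 1; rewrite mul1r.
- move=> I J [[I0 Isub] [Il Ir]] HJ HIJ.
  case: (classic (forall b, J b -> ann M b)) => [H|H]; first by right.
  left; move=> a Ia r.
  have [b Hb] : exists b, ~ (J b -> ann M b).
    by apply: NNPP => Hn; apply: (H) => b; apply: NNPP => Hb; apply: (Hn); exists b.
  have Jb : J b by apply: NNPP => Hn; apply: Hb => /Hn.
  have [r0 Hr0] : exists r0, ~ M (b * r0).
    apply: NNPP => Hn; apply: Hb => _ r0; apply: NNPP => Hr; apply: (Hn); by exists r0.
  have [m [s [Hm ->]]] := max_gen _ _ HM Hr0 r.
  rewrite mulrDr; apply: (@as_add M _ _ (conj M0 Msub)); first exact: Mmul.
  rewrite !mulrA; apply: (HIJ (a * s) b) => //; exact: Ir.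
Qed.

Lemma ann_Jspec M : maximal_left_ideal M -> Jspec (ann M).
Proof.
move=> HM; split; first exact: ann_prime.
by move=> x Jx r; apply: (jac_mulr x r Jx).
Qed.

Lemma ann_sub M x : ann M x -> M x.
Proof. by move=> H; have := H 1; rewrite mulr1. Qed.

Lemma exists_max (L : R -> Prop) : left_ideal L -> ~ L 1 ->
  exists M, maximal_left_ideal M /\ (forall x, L x -> M x).
Proof.
move=> HL L1.
pose Pp (X : R -> Prop) := (forall x, ~ X x) \/
  (left_ideal X /\ (forall x, L x -> X x) /\ ~ X 1).
have chain : forall F : (R -> Prop) -> Prop,
    (forall X, F X -> Pp X) -> classical_sets.total_on F classical_sets.subset ->
    Pp (classical_sets.bigcup F (fun X => X)).
  move=> F FP Ftot.
  case: (classic (exists X x, F X /\ X x)) => [[X0 [x0 [FX0 X0x0]]]|Hn]; last first.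
    by left => x [X FX Xx]; apply: (Hn); exists X, x.
  have ideal_of X x : F X -> X x -> left_ideal X /\ (forall x, L x -> X x) /\ ~ X 1.
    by move=> FX Xx; case: (FP X FX) => // H; case: (H x).
  have [[[X00 X0sub] X0mul] [X0L X01]] := ideal_of X0 x0 FX0 X0x0.
  right; split; [split; [split|]|split].
  - by exists X0.
  - move=> x y [X1 FX1 X1x] [X2 FX2 X2y].
    case: (Ftot X1 X2 FX1 FX2) => Hs.
      have [[[_ S] _] _] := ideal_of X2 y FX2 X2y.
      by exists X2 => //; apply: (S) => //; apply: Hs.
    have [[[_ S] _] _] := ideal_of X1 x FX1 X1x.
    by exists X1 => //; apply: (S) => //; apply: Hs.
  - move=> r x [X FX Xx]; have [[_ Mu] _] := ideal_of X x FX Xx.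
    by exists X => //; apply: (Mu).
  - by move=> x Lx; exists X0 => //; apply: (X0L).
  - by move=> [X FX X1]; have [_ [_ H]] := ideal_of X 1 FX X1; apply: (H).
have [A [PA Amax]] := classical_sets.Zorn_bigcup chain.
have [HA0|[HAI [HAL HA1]]] := PA.
  exfalso; apply: (Amax L).
    split; first by move=> x /HA0.
    by move=> H; have [[L0 _] _] := HL; apply: (HA0 0); apply: (H).
  by right.
exists A; split => //; split => //; split; first by exists 1.
move=> N HN Npr HAN x Nx; apply: NNPP => Ax.
apply: (Amax N); first by split => // H; apply: Ax; apply: (H).
right; split => //; split; first by move=> y /HAL /HAN.
exact: (@li_not1 N).
Qed.

End Helpers.

Lemma jac_add (R : pzRingType) (x y : R) : jacobson x -> jacobson y -> jacobson (x + y).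
Proof.
move=> Jx Jy M HM; have [[HMa _] _] := HM.
exact: (@as_add R M _ _ HMa (Jx M HM) (Jy M HM)).
Qed.

Lemma jac_mull (R : pzRingType) (s x : R) : jacobson x -> jacobson (s * x).
Proof. move=> Jx M HM; have [[_ HMm] _] := HM; exact: HMm (Jx M HM). Qed.

Theorem lemma3p2 (R : pzRingType) (A : (R -> Prop) -> Prop)
  (hA : forall P, A P -> Jspec P)
  (hclosed : closed_Jspec A) (hopen : open_Jspec A) :
  exists e : R, (forall P, A P <-> We e P) /\
    (forall r : R, jacobson (e * r * (1 - e))).
Proof.
have [I [[[I0 Isub] [Il Ir]] hI]] := hclosed.
have [K [[[K0 Ksub] [Kl Kr]] hK]] := hopen.
have dich : forall P, Jspec P -> W I P \/ W K P.
  move=> P JP; case: (classic (A P)) => HAP; first by left; apply/hI.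
  by right; apply/hK.
have disj : forall P, W I P -> W K P -> False.
  by move=> P /hI HAP /hK [_].
pose S (x : R) := exists a b j, I a /\ K b /\ jacobson j /\ x = a + b + j.
have S1 : S 1.
  apply: NNPP => nS1.
  have SL : left_ideal S.
    split; first split.
    - exists 0, 0, 0; split=> //; split=> //; split; last by rewrite !addr0.
      by move=> M [[[M0 _] _] _].
    - move=> x y [a1 [b1 [j1 [Ha1 [Hb1 [Hj1 ->]]]]]] [a2 [b2 [j2 [Ha2 [Hb2 [Hj2 ->]]]]]].
      exists (a1 - a2), (b1 - b2), (j1 - j2); split; first exact: Isub.
      split; first exact: Ksub.
      split.
        move=> M HM; have [[[_ Ms] _] _] := HM; apply: Ms; [exact: Hj1|exact: Hj2].
      by rewrite !opprD addrACA [in X in X + _ = _]addrACA.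
    - move=> r x [a [b [j [Ha [Hb [Hj ->]]]]]].
      exists (r * a), (r * b), (r * j); split; first exact: Il.
      split; first exact: Kl.
      split; first exact: jac_mull.
      by rewrite !mulrDr.
  have [M [HM HSM]] := @exists_max _ _ SL nS1.
  have JP := @ann_Jspec _ _ HM.
  apply: (disj (ann R M)).
    split=> // x Ix r; apply: HSM; exists (x * r), 0, 0; split; first exact: Ir.
    split=> //; split; last by rewrite !addr0.
    by move=> N [[[N0 _] _] _].
  split=> // x Kx r; apply: HSM; exists 0, (x * r), 0; split=> //.
  split; first exact: Kr.
  split; last by rewrite add0r addr0.
  by move=> N [[[N0 _] _] _].
have [a [b [j [Ia [Kb [Jj E1]]]]]] := S1.
exists a; split.
  move=> P; split.
    move=> /hI [JP IP]; split=> // x Hx; apply: Hx; last exact: IP.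
    by have [[? ?] _] := JP.
  move=> [JP HP].
  have Pa : P a by apply: HP => J HJ.
  case: (dich P JP) => [/hI //|[_ KP]].
  exfalso; have [[[P0 Psub] [Pl Pr]] [[z Hz] _]] := JP.1.
  apply: Hz; rewrite -(mulr1 z); apply: Pl; rewrite E1.
  apply: (@as_add R P _ _ (conj P0 Psub)); last exact: JP.2.
  apply: (@as_add R P _ _ (conj P0 Psub)) => //; exact: KP.
move=> r.
have -> : 1 - a = b + j by apply/eqP; rewrite subr_eq E1 [b + j + a]addrC addrA.
rewrite mulrDr; apply: jac_add; last exact: jac_mull.
move=> M HM; apply: ann_sub; have JP := @ann_Jspec _ _ HM.
have [[[_ _] [Pl Pr]] _] := JP.1.
case: (dich _ JP) => [[_ IP]|[_ KP]].
  by apply: (Pr); apply: (Pr); apply: (IP).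
by apply: Pl; apply: KP.
Qed.
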